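(* Let $(X,\sigma,\tau)$ be a Lorentzian metric space which is separable, chronologically dense and satisfies the S-property. Then $(\overline{X},\sigma_{chr},\overline{\tau})$ is also a Lorentzian metric space; that is, $\overline{\tau}:\overline{X}\times\overline{X}\to[0,\infty]$ is lower semicontinuous with respect to $\sigma_{chr}$, and $\overline{\tau}(a,c)\geq\overline{\tau}(a,b)+\overline{\tau}(b,c)$ whenever $\overline{\tau}(a,b)>0$ and $\overline{\tau}(b,c)>0$.
   Context: A Lorentzian metric space $(X,\sigma,\tau)$ is a topological space $(X,\sigma)$ together with a function $\tau:X\times X\to[0,\infty]$ which is lower semicontinuous (with respect to the product topology) and satisfies $\tau(x,z)\geq\tau(x,y)+\tau(y,z)$ whenever $\tau(x,y)>0$ and $\tau(y,z)>0$. Write $x\ll y$ iff $\tau(x,y)>0$, $I^+(x)=\{y:x\ll y\}$, $I^-(x)=\{y:y\ll x\}$, and $I^\pm[A]=\bigcup_{a\in A}I^\pm(a)$ for $A\subset X$. A future (resp. past) chain is a sequence $\{x_n\}$ with $x_n\ll x_{n+1}$ (resp. $x_{n+1}\ll x_n$) for all $n$. $X$ is separable if there is a countable $S\subset X$ such that whenever $x\ll y$ there is $s\in S$ with $x\ll s\ll y$. $X$ is chronologically dense if every $x$ with $I^-(x)\neq\emptyset$ is the $\sigma$-limit of some future chain, and every $x$ with $I^+(x)\neq\emptyset$ is the $\sigma$-limit of some past chain. A past set is $P\subset X$ with $P=I^-[P]$; the common past of $S\subset X$ is $\downarrow S=I^-[\{p: p\ll q\ \forall q\in S\}]$. An IP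 (indecomposable past set) is a past set that cannot be written as the union of two proper subsets which are both past sets; a PIP is an IP of the form $I^-(p)$. Future sets, $\uparrow S$, IFs and PIFs are defined dually (exchanging past and future). For a nonempty IP $P$ and a nonempty IF $F$, write $P\sim_S F$ iff $P$ is a maximal IP contained in $\downarrow F$ and $F$ is a maximal IF contained in $\uparrow P$; write $P\sim_S\emptyset$ (resp. $\emptyset\sim_S F$) if the nonempty IP $P$ (resp. nonempty IF $F$) is not S-related to any nonempty IF (resp. IP). $X$ satisfies the S-property if for every $x\in X$, $I^-(x)\sim_S I^+(x)$, no PIF other than $I^+(x)$ is S-related to $I^-(x)$, and no PIP other than $I^-(x)$ is S-related to $I^+(x)$. The c-completion is $\overline{X}=\{(P,F): P\sim_S F\}$ (with $P$ an IP or $\emptyset$, $F$ an IF or $\emptyset$), with $\mathbf{i}(x)=(I^-(x),I^+(x))$ and c-boundary $\partial X=\overline{X}\setminus\mathbf{i}(X)$. For a sequence $\{(P_n,F_n)\}$ in $\overline{X}$, define $L(\{(P_n,F_n)\})$ as the set of $(P,F)\in\overline{X}$ such that: if $P\neq\emptyset$, then $P\subset LI(P_n)$ and $P$ is a maximal IP contained in $LS(P_n)$; and if $F\neq\emptyset$, then $F\subset LI(F_n)$ and $F$ is a maximal IF contained in $LS(F_n)$. Here $LI(A_n)=\bigcup_n\bigcap_{k\geq n}A_k$ and $LS(A_n)=\bigcap_n\bigcup_{k\geq n}A_k$. The chronological topology $\sigma_{chr}$ on $\overline{X}$ is the topology whose closed sets are the $C\subset\overline{X}$ with $L(s)\subset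 C$ for every sequence $s$ in $C$. For $(P,F),(P',F')\in\overline{X}$, $\overline{\tau}((P,F),(P',F'))=0$ if $F=\emptyset$ or $P'=\emptyset$, and otherwise $\overline{\tau}((P,F),(P',F'))=\lim_n\tau(q_n,p'_n)$, where $\{q_n\}$ is a past chain with $F=I^+[\{q_n\}]$ and $\{p'_n\}$ is a future chain with $P'=I^-[\{p'_n\}]$. (In a separable $X$, every nonempty IP is the past of a future chain and every nonempty IF is the future of a past chain; the limit exists and is independent of the chains.) *)

(* Defs.v *)
From HB Require Import structures.
From mathcomp Require Import all_boot all_order all_algebra.
From mathcomp Require Import all_classical all_reals all_analysis.
Set Implicit Arguments. Unset Strict Implicit. Unset Printing Implicit Defensive.
Import Order.TTheory GRing.Theory Num.Theory.
Local Open Scope classical_set_scope.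
Local Open Scope ereal_scope.

Section LMS.
Context {X : Type} {R : realType} (tau : X -> X -> \bar R).

Definition chr (x y : X) : Prop := 0 < tau x y.

Definition Ipast (x : X) : set X := [set y | chr y x].
Definition Ifut (x : X) : set X := [set y | chr x y].
Definition IpastS (A : set X) : set X := [set y | exists2 a, A a & chr y a].
Definition IfutS (A : set X) : set X := [set y | exists2 a, A a & chr a y].

Definition future_chain (u : nat -> X) : Prop := forall n, chr (u n) (u n.+1).
Definition past_chain (u : nat -> X) : Prop := forall n, chr (u n.+1) (u n).

Definition separable : Prop :=
  exists S : set X, countable S /\
    forall x y, chr x y -> exists2 s, S s & chr x s /\ chr s y.

Definition past_set (P : set X) : Prop := P = IpastS P.
Definition future_set (F : set X) : Prop := F = IfutS F.

Definition cpast (S : set X) : set X :=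
  IpastS [set p | forall q, S q -> chr p q].
Definition cfut (S : set X) : set X :=
  IfutS [set p | forall q, S q -> chr q p].

Definition IP (P : set X) : Prop :=
  past_set P /\ ~ (exists A B : set X, past_set A /\ past_set B /\
                     A `<` P /\ B `<` P /\ P = A `|` B).
Definition IF (F : set X) : Prop :=
  future_set F /\ ~ (exists A B : set X, future_set A /\ future_set B /\
                     A `<` F /\ B `<` F /\ F = A `|` B).

Definition maxIP_in (P S : set X) : Prop :=
  IP P /\ P `<=` S /\ forall P', IP P' -> P `<=` P' -> P' `<=` S -> P' = P.
Definition maxIF_in (F S : set X) : Prop :=
  IF F /\ F `<=` S /\ forall F', IF F' -> F `<=` F' -> F' `<=` S -> F' = F.

Definition Srel (P F : set X) : Prop :=
  P !=set0 /\ F !=set0 /\ maxIP_in P (cpast F) /\ maxIF_in F (cfut P).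

Definition simS (P F : set X) : Prop :=
  Srel P F
  \/ (F = set0 /\ P !=set0 /\ IP P /\ forall F', F' !=set0 -> IF F' -> ~ Srel P F')
  \/ (P = set0 /\ F !=set0 /\ IF F /\ forall P', P' !=set0 -> IP P' -> ~ Srel P' F).

Definition S_property : Prop :=
  forall x, [/\ simS (Ipast x) (Ifut x),
     (forall y, simS (Ipast x) (Ifut y) -> Ifut y = Ifut x) &
     (forall y, simS (Ipast y) (Ifut x) -> Ipast y = Ipast x)].

Definition Xbar : Type := {pf : set X * set X | simS pf.1 pf.2}.
Definition Pof (a : Xbar) : set X := (proj1_sig a).1.
Definition Fof (a : Xbar) : set X := (proj1_sig a).2.

Definition LI (A : nat -> set X) : set X :=
  [set x | exists n, forall k, (n <= k)%N -> A k x].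
Definition LS (A : nat -> set X) : set X :=
  [set x | forall n, exists2 k, (n <= k)%N & A k x].

Definition Lim (s : nat -> Xbar) : set Xbar :=
  [set a | (Pof a !=set0 -> Pof a `<=` LI (Pof \o s) /\ maxIP_in (Pof a) (LS (Pof \o s)))
        /\ (Fof a !=set0 -> Fof a `<=` LI (Fof \o s) /\ maxIF_in (Fof a) (LS (Fof \o s)))].

Definition chr_closed (C : set Xbar) : Prop :=
  forall s : nat -> Xbar, (forall n, C (s n)) -> Lim s `<=` C.
Definition chr_open (U : set Xbar) : Prop := chr_closed (~` U).

Definition chr_prod_open (W : set (Xbar * Xbar)) : Prop :=
  forall ab, W ab -> exists U V : set Xbar,
    [/\ chr_open U, chr_open V, U ab.1, V ab.2 & U `*` V `<=` W].

Definition taubar (a b : Xbar) : \bar R :=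
  match pselect (Fof a = set0 \/ Pof b = set0) with
  | left _ => 0
  | right _ =>
      xget 0 [set v : \bar R | exists q p : nat -> X,
        [/\ past_chain q, Fof a = IfutS (range q),
            future_chain p, Pof b = IpastS (range p) &
            (fun n => tau (q n) (p n)) @ \oo --> v]]
  end.

End LMS.

Definition lsc_wrt {T : Type} {R : realType} (op : set T -> Prop)
  (f : T -> \bar R) : Prop :=
  forall a : R, op [set t | a%:E < f t].

(* Main.v *)
Require Import Defs.
From HB Require Import structures.
From mathcomp Require Import all_boot all_order all_algebra.
From mathcomp Require Import all_classical all_reals all_analysis.
Import Order.TTheory GRing.Theory Num.Theory.
Local Open Scope classical_set_scope.
Local Open Scope ereal_scope.

Lemma sub_past {X : Type} {R : realType} {tau : X -> X -> \bar R} (P S : set X) :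
  past_set tau P -> S `<=` P -> IpastS tau S `<=` P.
Proof. by move=> hP hS y [a /hS Pa ya]; rewrite hP; exists a. Qed.

Lemma past_up {X : Type} {R : realType} {tau : X -> X -> \bar R} {P : set X} {c : X} :
  past_set tau P -> P c -> exists2 z, P z & chr tau c z.
Proof. by move=> hP; rewrite {1}hP. Qed.

Lemma IpastS_past {X : Type} {R : realType} {tau : X -> X -> \bar R}
  (htr : forall x y z, chr tau x y -> chr tau y z -> chr tau x z)
  (hint : forall x y, chr tau x y -> exists s, chr tau x s /\ chr tau s y)
  (S : set X) : past_set tau (IpastS tau S).
Proof.
rewrite /past_set; apply/seteqP; split => y.
  move=> [a Sa ya]; have [s [ys sa]] := hint _ _ ya.
  by exists s => //; exists a.
by move=> [b [a Sa ba] yb]; exists a => //; exact: htr yb ba.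
Qed.

Lemma IP_directed {X : Type} {R : realType} {tau : X -> X -> \bar R}
  (htr : forall x y z, chr tau x y -> chr tau y z -> chr tau x z)
  (hint : forall x y, chr tau x y -> exists s, chr tau x s /\ chr tau s y)
  (P : set X) : IP tau P -> forall x y, P x -> P y ->
  exists2 z, P z & chr tau x z /\ chr tau y z.
Proof.
move=> [hP hind] x y Px Py; apply: contrapT => H; apply: hind.
pose A := IpastS tau (P `&` Ifut tau x).
pose B := IpastS tau (P `\` A).
have AP : A `<=` P by apply: sub_past => // z [].
have BP : B `<=` P by apply: sub_past => // z [].
have pA : past_set tau A by apply: IpastS_past.
exists A, B; split; first exact: pA.
split; first exact: IpastS_past.
split; first by split => // /(_ y Py) [z [Pz xz] yz]; apply: H; exists z.
split.
  split => // /(_ x Px) [b [Pb nAb] xb]; apply: nAb.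
  move: Pb; rewrite hP => -[b' Pb' bb']; exists b' => //; split => //.
  exact: htr xb bb'.
apply/seteqP; split => p; last by case=> [/AP|/BP].
move=> Pp; move: (Pp); rewrite hP => -[p' Pp' pp'].
have [Ap'|nAp'] := pselect (A p').
  by left; rewrite pA; exists p'.
by right; exists p'.
Qed.

Lemma sep_interp {X : Type} {R : realType} {tau : X -> X -> \bar R} :
  separable tau -> forall x y, chr tau x y -> exists s, chr tau x s /\ chr tau s y.
Proof. by move=> [S [_ hS]] x y /hS [s _ h]; exists s. Qed.

Lemma IP_chain {X : Type} {R : realType} {tau : X -> X -> \bar R}
  (htr : forall x y z, chr tau x y -> chr tau y z -> chr tau x z)
  (hsep : separable tau)
  {P : set X} : IP tau P -> P !=set0 ->
  exists p, future_chain tau p /\ P = IpastS tau (range p).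
Proof.
move=> hIP [p0 Pp0].
have hint := sep_interp hsep.
have hP := hIP.1.
have [S [cS hS]] := hsep.
have [S0|] := pfcard_geP cS.
  move: (Pp0); rewrite hP => -[p1 Pp1 /hS [s Ss _]].
  by move: Ss; rewrite S0.
case/surjfunPex => f Sf.
have step : forall nc : nat * X, exists c',
    P nc.2 -> [/\ P c', chr tau nc.2 c' & (P (f nc.1) -> chr tau (f nc.1) c')].
  move=> [n c] /=.
  have [Pc|nPc] := pselect (P c); last by exists c.
  have [Pf|nPf] := pselect (P (f n)).
    have [z Pz [cz fz]] := @IP_directed _ _ tau htr hint P hIP _ _ Pc Pf.
    by exists z.
  have [z Pz cz] := past_up hP Pc.
  by exists z => _; split.
have [g hg] := choice step.
pose p := fun n => nat_rect (fun _ => X) p0 (fun n c => g (n, c)) n.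
have pS n : p n.+1 = g (n, p n) by [].
have Pp n : P (p n).
  elim: n => [//|n IH]; rewrite pS; by case: (hg (n, p n) IH).
exists p; split.
  by move=> n; rewrite /chr pS; case: (hg (n, p n) (Pp n)).
apply/seteqP; split; last first.
  by apply: sub_past => // _ [n _ <-].
move=> y; rewrite {1}hP => -[y' Py' /hS [s Ss [ys sy']]].
move: Ss; rewrite Sf => -[n _ fns].
have Pfn : P (f n) by rewrite hP; exists y'; rewrite ?fns.
case: (hg (n, p n) (Pp n)) => _ _ /(_ Pfn) fp.
exists (p n.+1); first by exists n.+1.
by apply: htr ys _; rewrite -fns pS.
Qed.
Definition Tsup {X : Type} {R : realType} (tau : X -> X -> \bar R) (F P : set X) : \bar R :=
  ereal_sup [set v | exists2 x, F x & exists2 y, P y & tau x y = v].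

Lemma step_le {X : Type} {R : realType} {tau : X -> X -> \bar R}
  (tau_ge0 : forall x y, 0 <= tau x y)
  (tau_rev : forall x y z, 0 < tau x y -> 0 < tau y z ->
             tau x y + tau y z <= tau x z) a x y b :
  chr tau a x -> chr tau y b -> tau x y <= tau a b.
Proof.
move=> ax yb; have [h|h] := leP (tau x y) 0; first exact: le_trans h (tau_ge0 _ _).
have h1 : tau x y <= tau a y.
  exact: le_trans (lee_paddl (tau_ge0 a x) (lexx _)) (tau_rev a x y ax h).
have ay : 0 < tau a y := lt_le_trans h h1.
apply: le_trans h1 _.
exact: le_trans (lee_paddr (tau_ge0 y b) (lexx _)) (tau_rev a y b ay yb).
Qed.

Lemma past_chain_le {X : Type} {R : realType} {tau : X -> X -> \bar R}
  (htr : forall x y z, chr tau x y -> chr tau y z -> chr tau x z)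
  (q : nat -> X) x : past_chain tau q -> forall m k, chr tau (q m) x -> chr tau (q (m + k)%N) x.
Proof.
move=> hq m; elim=> [|k IH]; first by rewrite addn0.
by move=> /IH h; rewrite addnS; apply: htr h; apply: hq.
Qed.

Lemma future_chain_le {X : Type} {R : realType} {tau : X -> X -> \bar R}
  (htr : forall x y z, chr tau x y -> chr tau y z -> chr tau x z)
  (p : nat -> X) y : future_chain tau p -> forall m k, chr tau y (p m) -> chr tau y (p (m + k)%N).
Proof.
move=> hp m; elim=> [|k IH]; first by rewrite addn0.
by move=> /IH h; rewrite addnS; apply: htr h _; apply: hp.
Qed.

Lemma chain_dom {X : Type} {R : realType} {tau : X -> X -> \bar R}
  (tau_ge0 : forall x y, 0 <= tau x y)
  (tau_rev : forall x y z, 0 < tau x y -> 0 < tau y z ->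
             tau x y + tau y z <= tau x z)
  (htr : forall x y z, chr tau x y -> chr tau y z -> chr tau x z)
  (q p : nat -> X) x y : past_chain tau q -> future_chain tau p ->
  IfutS tau (range q) x -> IpastS tau (range p) y ->
  exists M, tau x y <= tau (q M) (p M).
Proof.
move=> hq hp [_ [m _ <-] qx] [_ [k _ <-] yp].
exists (m + k)%N; apply: step_le => //.
  exact: past_chain_le.
by rewrite addnC; apply: future_chain_le.
Qed.

Lemma chain_nd {X : Type} {R : realType} {tau : X -> X -> \bar R}
  (tau_ge0 : forall x y, 0 <= tau x y)
  (tau_rev : forall x y z, 0 < tau x y -> 0 < tau y z ->
             tau x y + tau y z <= tau x z)
  (q p : nat -> X) : past_chain tau q -> future_chain tau p ->
  nondecreasing_seq (fun n => tau (q n) (p n)).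
Proof.
by move=> hq hp; apply/nondecreasing_seqP => n; apply: step_le.
Qed.

Lemma lim_chain {X : Type} {R : realType} {tau : X -> X -> \bar R}
  (tau_ge0 : forall x y, 0 <= tau x y)
  (tau_rev : forall x y z, 0 < tau x y -> 0 < tau y z ->
             tau x y + tau y z <= tau x z)
  (htr : forall x y z, chr tau x y -> chr tau y z -> chr tau x z)
  (q p : nat -> X) : past_chain tau q -> future_chain tau p ->
  (fun n => tau (q n) (p n)) @ \oo -->
     Tsup tau (IfutS tau (range q)) (IpastS tau (range p)).
Proof.
move=> hq hp.
have -> : Tsup tau (IfutS tau (range q)) (IpastS tau (range p)) =
          ereal_sup (range (fun n => tau (q n) (p n))).
  apply/le_anti/andP; split.
    apply: ge_ereal_sup => _ [x Fx [y Py <-]].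
    have [M hM] := @chain_dom _ _ tau tau_ge0 tau_rev htr q p x y hq hp Fx Py.
    apply: le_trans hM _; apply: ereal_sup_ubound; by exists M.
  apply: ge_ereal_sup => _ [n _ <-]; apply: ereal_sup_ubound.
  exists (q n); first by exists (q n.+1); [exists n.+1 | apply: hq].
  exists (p n); first by exists (p n.+1); [exists n.+1 | apply: hp].
  by [].
exact/ereal_nondecreasing_cvgn/chain_nd.
Qed.

Lemma chr_trans_of {X : Type} {R : realType} {tau : X -> X -> \bar R}
  (tau_ge0 : forall x y, 0 <= tau x y)
  (tau_rev : forall x y z, 0 < tau x y -> 0 < tau y z ->
             tau x y + tau y z <= tau x z) :
  forall x y z, chr tau x y -> chr tau y z -> chr tau x z.
Proof.
move=> x y z xy yz; rewrite /chr.
exact: lt_le_trans (adde_gt0 xy yz) (tau_rev _ _ _ xy yz).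
Qed.

Lemma IF_chain {X : Type} {R : realType} {tau : X -> X -> \bar R}
  (htr : forall x y z, chr tau x y -> chr tau y z -> chr tau x z)
  (hsep : separable tau)
  {F : set X} : IF tau F -> F !=set0 ->
  exists q, past_chain tau q /\ F = IfutS tau (range q).
Proof.
move=> hF hne.
have htr' : forall x y z, chr (fun a b => tau b a) x y ->
    chr (fun a b => tau b a) y z -> chr (fun a b => tau b a) x z.
  by move=> x y z xy yz; apply: htr yz xy.
have hsep' : separable (fun a b => tau b a).
  case: hsep => S [cS hS]; exists S; split => // x y /hS [s Ss [ys sx]].
  by exists s.
exact: (@IP_chain _ _ (fun a b => tau b a) htr' hsep' F hF hne).
Qed.

Lemma Fof_IF {X : Type} {R : realType} {tau : X -> X -> \bar R} (a : Xbar tau) :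
  Fof a !=set0 -> IF tau (Fof a).
Proof.
move=> hne; have : simS tau (Pof a) (Fof a) := proj2_sig a.
case=> [[_ [_ [_ [? _]]]]//|[[F0 _]|[_ [_ [? _]]]]//].
by move: hne; rewrite F0 => -[].
Qed.

Lemma Pof_IP {X : Type} {R : realType} {tau : X -> X -> \bar R} (a : Xbar tau) :
  Pof a !=set0 -> IP tau (Pof a).
Proof.
move=> hne; have : simS tau (Pof a) (Fof a) := proj2_sig a.
case=> [[_ [_ [[? _] _]]]//|[[_ [_ [? _]]]//|[P0 _]]].
by move: hne; rewrite P0 => -[].
Qed.

Lemma taubar_0 {X : Type} {R : realType} {tau : X -> X -> \bar R} (a b : Xbar tau) :
  Fof a = set0 \/ Pof b = set0 -> taubar a b = 0.
Proof. by rewrite /taubar; case: pselect. Qed.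

Lemma taubar_T {X : Type} {R : realType} {tau : X -> X -> \bar R}
  (tau_ge0 : forall x y, 0 <= tau x y)
  (tau_rev : forall x y z, 0 < tau x y -> 0 < tau y z ->
             tau x y + tau y z <= tau x z)
  (hsep : separable tau) (a b : Xbar tau) :
  Fof a !=set0 -> Pof b !=set0 -> taubar a b = Tsup tau (Fof a) (Pof b).
Proof.
move=> hF hP.
have htr := chr_trans_of tau_ge0 tau_rev.
rewrite /taubar; case: pselect => [[F0|P0]|_].
- by move: hF; rewrite F0 => -[].
- by move: hP; rewrite P0 => -[].
have [q [hq Fq]] := IF_chain htr hsep (Fof_IF a hF) hF.
have [p [hp Pp]] := IP_chain htr hsep (Pof_IP b hP) hP.
apply: xget_unique.
  exists q, p; split => //; rewrite Fq Pp; exact: lim_chain.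
move=> v [q' [p' [hq' Fq' hp' Pp' cv]]].
have := lim_chain tau_ge0 tau_rev htr q' p' hq' hp'; rewrite -Fq' -Pp' => cv2.
exact: cvg_unique cv cv2.
Qed.
Lemma nonemptyN {T : Type} (A : set T) : ~ (A !=set0) -> A = set0.
Proof. by move=> h; apply/seteqP; split => // x Ax; apply: h; exists x. Qed.

Lemma taubar_ge0 {X : Type} {R : realType} {tau : X -> X -> \bar R}
  (tau_ge0 : forall x y, 0 <= tau x y)
  (tau_rev : forall x y z, 0 < tau x y -> 0 < tau y z ->
             tau x y + tau y z <= tau x z)
  (hsep : separable tau) (a b : Xbar tau) : 0 <= taubar a b.
Proof.
have [hF|/nonemptyN hF] := pselect (Fof a !=set0); last by rewrite taubar_0 //; left.
have [hP|/nonemptyN hP] := pselect (Pof b !=set0); last by rewrite taubar_0 //; right.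
rewrite taubar_T //; case: hF => x Fx; case: hP => y Py.
apply: le_trans (tau_ge0 x y) _; apply: ereal_sup_ubound.
by exists x => //; exists y.
Qed.

Lemma taubar_gt0_ne {X : Type} {R : realType} {tau : X -> X -> \bar R} (a b : Xbar tau) :
  0 < taubar a b -> Fof a !=set0 /\ Pof b !=set0.
Proof.
move=> h; split; apply: contrapT => /nonemptyN h0; move: h; rewrite taubar_0 ?ltxx //;
  by [left | right].
Qed.

Lemma near_ge (P : nat -> Prop) (M : nat) :
  (forall n, (M <= n)%N -> P n) -> \forall n \near \oo, P n.
Proof. by move=> h; exists M => //; apply: h. Qed.

Theorem mainTheorem1 (R : realType) (X : topologicalType)
  (tau : X -> X -> \bar R)
  (tau_ge0 : forall x y, 0 <= tau x y)
  (tau_lsc : lower_semicontinuous (fun xy : X * X => tau xy.1 xy.2))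
  (tau_rev : forall x y z, 0 < tau x y -> 0 < tau y z ->
             tau x y + tau y z <= tau x z)
  (hsep : separable tau)
  (hdense : forall x : X,
     (Ipast tau x !=set0 -> exists u : nat -> X, future_chain tau u /\ u @ \oo --> x) /\
     (Ifut tau x !=set0 -> exists u : nat -> X, past_chain tau u /\ u @ \oo --> x))
  (hS : S_property tau) :
  (forall a b : Xbar tau, 0 <= taubar a b) /\
  lsc_wrt (chr_prod_open (tau := tau)) (fun ab : Xbar tau * Xbar tau => taubar ab.1 ab.2) /\
  (forall a b c : Xbar tau, 0 < taubar a b -> 0 < taubar b c ->
     taubar a b + taubar b c <= taubar a c).
Proof.
have htr := chr_trans_of tau_ge0 tau_rev.
have tge0 := taubar_ge0 tau_ge0 tau_rev hsep.
split; first exact: tge0.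
split.
  move=> r [x y] /= hr.
  have [r0|r0] := ltP r 0%R.
    exists setT, setT; split => //.
    - by rewrite /chr_open /chr_closed => s hs; exfalso; exact: (hs 0%N I).
    - by rewrite /chr_open /chr_closed => s hs; exfalso; exact: (hs 0%N I).
    - move=> [z w] _ /=; apply: lt_le_trans (tge0 z w).
      by rewrite lte_fin.
  have [hF hP] : Fof x !=set0 /\ Pof y !=set0.
    apply: taubar_gt0_ne; apply: le_lt_trans hr; by rewrite lee_fin.
  move: hr; rewrite taubar_T // => /ereal_sup_gt [_ [q Fq [p Pp <-]] hv].
  exists [set z | Fof z q], [set w | Pof w p]; split => //.
  - rewrite /chr_open /chr_closed => s hs z [_ hz] /= Fzq.
    have [hLI _] := hz (ex_intro _ q Fzq).
    have [n hn] := hLI q Fzq.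
    exact: hs n (hn n (leqnn n)).
  - rewrite /chr_open /chr_closed => s hs z [hz _] /= Pzp.
    have [hLI _] := hz (ex_intro _ p Pzp).
    have [n hn] := hLI p Pzp.
    exact: hs n (hn n (leqnn n)).
  - move=> [z w] [/= Fz Pw] /=; rewrite taubar_T //; last by exists p.
      apply: lt_le_trans hv _; apply: ereal_sup_ubound.
      by exists q => //; exists p.
    by exists q.
move=> a b c hab hbc.
have [hFa hPb] := taubar_gt0_ne a b hab.
have [hFb hPc] := taubar_gt0_ne b c hbc.
move: hab hbc; rewrite !taubar_T // => hab hbc.
have hPbF : Pof b `<=` cpast tau (Fof b).
  have : simS tau (Pof b) (Fof b) := proj2_sig b.
  case=> [[_ [_ [[_ [? _]] _]]]//|[[F0 _]|[P0 _]]].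
    by move: hFb; rewrite F0 => -[].
  by move: hPb; rewrite P0 => -[].
have [q [hq Fq]] := IF_chain htr hsep (Fof_IF a hFa) hFa.
have [p [hp Pp]] := IP_chain htr hsep (Pof_IP b hPb) hPb.
have [q' [hq' Fq']] := IF_chain htr hsep (Fof_IF b hFb) hFb.
have [p' [hp' Pp']] := IP_chain htr hsep (Pof_IP c hPc) hPc.
pose u := fun n => tau (q n) (p n).
pose u' := fun n => tau (q' n) (p' n).
have cvu : u @ \oo --> Tsup tau (Fof a) (Pof b).
  by rewrite Fq Pp; apply: lim_chain.
have cvu' : u' @ \oo --> Tsup tau (Fof b) (Pof c).
  by rewrite Fq' Pp'; apply: lim_chain.
have [M hM] : exists M, 0 < u M.
  move: hab => /ereal_sup_gt [_ [x Fx [y Py <-]] hv].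
  rewrite Fq in Fx; rewrite Pp in Py.
  have [M hM] := chain_dom tau_ge0 tau_rev htr q p x y hq hp Fx Py.
  by exists M; apply: lt_le_trans hv hM.
have [M' hM'] : exists M, 0 < u' M.
  move: hbc => /ereal_sup_gt [_ [x Fx [y Py <-]] hv].
  rewrite Fq' in Fx; rewrite Pp' in Py.
  have [N hM0] := chain_dom tau_ge0 tau_rev htr q' p' x y hq' hp' Fx Py.
  by exists N; apply: lt_le_trans hv hM0.
apply: (cvge_to_le (cvgeD _ cvu cvu')).
  by apply: ge0_adde_def; rewrite inE ltW.
apply: (@near_ge _ (maxn M M')) => n; rewrite geq_max => /andP[Mn M'n].
have un : 0 < u n.
  apply: lt_le_trans hM _; by have := chain_nd tau_ge0 tau_rev q p hq hp; move/(_ M n Mn).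
have un' : 0 < u' n.
  apply: lt_le_trans hM' _; by have := chain_nd tau_ge0 tau_rev q' p' hq' hp'; move/(_ M' n M'n).
have Pbn : Pof b (p n).
  by rewrite Pp; exists (p n.+1); [exists n.+1 | apply: hp].
have Fbn : Fof b (q' n).
  by rewrite Fq'; exists (q' n.+1); [exists n.+1 | apply: hq'].
have Fan : Fof a (q n).
  by rewrite Fq; exists (q n.+1); [exists n.+1 | apply: hq].
have Pcn : Pof c (p' n).
  by rewrite Pp'; exists (p' n.+1); [exists n.+1 | apply: hp'].
have pq' : chr tau (p n) (q' n).
  by case: (hPbF _ Pbn) => r hr pr; apply: htr pr (hr _ Fbn).
have pp' : chr tau (p n) (p' n) := htr _ _ _ pq' un'.
have h1 := tau_rev _ _ _ pq' un'.
have h2 := tau_rev _ _ _ un pp'.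
rewrite /=; apply: le_trans (_ : tau (q n) (p' n) <= _); last first.
  by apply: ereal_sup_ubound; exists (q n) => //; exists (p' n).
apply: le_trans h2; apply: leeD => //.
exact: le_trans (lee_paddl (tau_ge0 _ _) (lexx _)) h1.
Qed.
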